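(* Let $P$ be a weakly ranked poset, let $\kappa$ be a $P$-kernel, and let $f,g\in\mathscr{I}_{1/2}(P)$ be its right and left KLS-functions. Suppose $x\in P$ and $h\in\mathscr{I}_{1/2}(P)$ satisfy $(\bar h f)_{xz}(t)=(h\bar f)_{xz}(t)$ for all $z\ge x$. Then $h_{xz}(t)=g_{xz}(t)$ for all $z\ge x$.
   Context: A weakly ranked poset is a locally finite poset $P$ (all intervals finite) with a weak rank function: integers $r_{xy}$ for $x\le y$ with $r_{xy}>0$ for $x<y$ and $r_{xy}+r_{yz}=r_{xz}$. $I(P)=\prod_{x\le y}\mathbb{Z}[t]$ with components $f_{xy}(t)$ is a ring under convolution $(fg)_{xz}=\sum_{x\le y\le z}f_{xy}g_{yz}$ with identity $\delta$ ($\delta_{xx}=1$, $\delta_{xy}=0$ for $x<y$). $\mathscr{I}(P)$ is the subring of $f$ with $\deg f_{xy}\le r_{xy}$; it has the involution $\bar f_{xy}(t)=t^{r_{xy}}f_{xy}(t^{-1})$. $\mathscr{I}_{1/2}(P)$ is the set of $f\in\mathscr{I}(P)$ with $f_{xx}=1$ for all $x$ and $\deg f_{xy}<r_{xy}/2$ for $x<y$. A $P$-kernel is $\kappa\in\mathscr{I}(P)$ with $\kappa_{xx}=1$ for all $x$ and $\kappa^{-1}=\bar\kappa$. For a $P$-kernel $\kappa$ there are unique $f,g\in\mathscr{I}_{1/2}(P)$ with $\bar f=\kappa f$ and $\bar g=g\kappa$; $f$ is the right and $g$ the left KLS-function of $\kappa$. *)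

(* Defs.v *)
From HB Require Import structures.
From mathcomp Require Import all_boot all_order all_algebra.
Set Implicit Arguments. Unset Strict Implicit. Unset Printing Implicit Defensive.
Import Order.TTheory GRing.Theory.
Local Open Scope order_scope.

(* A weakly ranked poset: a partial order T, locally finite (each interval
   [x,z] is enumerated by a duplicate-free list), with a weak rank function. *)
Record wrposet (d : Order.disp_t) (T : porderType d) := WRPoset {
  itv : T -> T -> seq T;
  itv_uniq : forall x z, uniq (itv x z);
  mem_itv : forall x y z, (y \in itv x z) = (x <= y <= z);
  rk : T -> T -> int;
  rk_pos : forall x y, x < y -> (0 < rk x y)%R;
  rk_add : forall x y z, x <= y -> y <= z -> (rk x y + rk y z)%R = rk x z
}.

Local Open Scope ring_scope.

(* Elements of I(P): components f x y for x <= y (other values irrelevant). *)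
Definition incid (T : Type) := T -> T -> {poly int}.

Section Incidence.
Variables (d : Order.disp_t) (T : porderType d) (P : wrposet T).

Definition conv (f g : incid T) : incid T :=
  fun x z => \sum_(y <- itv P x z) f x y * g y z.

Definition delta : incid T := fun x y => if x == y then 1 else 0.

Definition eqI (f g : incid T) : Prop :=
  forall x y, (x <= y)%O -> f x y = g x y.

Definition in_I (f : incid T) : Prop :=
  forall x y, (x <= y)%O -> (size (f x y) <= `|rk P x y|.+1)%N.

(* involution: bar f_xy (t) = t^{r_xy} f_xy(t^{-1}) (for deg f_xy <= r_xy) *)
Definition bar (f : incid T) : incid T :=
  fun x y => \poly_(i < `|rk P x y|.+1) (f x y)`_(`|rk P x y| - i).

Definition in_Ihalf (f : incid T) : Prop :=
  in_I f /\ (forall x, f x x = 1) /\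
  (forall x y, (x < y)%O -> 2%:Z * ((size (f x y)).-1)%:Z < rk P x y).

Definition is_kernel (k : incid T) : Prop :=
  in_I k /\ (forall x, k x x = 1) /\
  eqI (conv k (bar k)) delta /\ eqI (conv (bar k) k) delta.

Definition right_KLS (k f : incid T) : Prop :=
  in_Ihalf f /\ eqI (bar f) (conv k f).

Definition left_KLS (k g : incid T) : Prop :=
  in_Ihalf g /\ eqI (bar g) (conv g k).

End Incidence.

(* Main.v *)
Require Import Defs.
From HB Require Import structures.
From mathcomp Require Import all_boot all_order all_algebra.
From mathcomp Require Import zify.
Import Order.TTheory GRing.Theory.
Local Open Scope order_scope.

Section Aux.
Local Open Scope ring_scope.
Variables (d : Order.disp_t) (T : porderType d) (P : wrposet T).

Lemma itv_sub_l (x y z : T) : (x <= y)%O ->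
  perm_eq (itv P y z) [seq w <- itv P x z | (y <= w)%O].
Proof.
move=> xy; apply: uniq_perm; first exact: itv_uniq.
  by rewrite filter_uniq // itv_uniq.
move=> w; rewrite mem_filter !mem_itv.
case yw: (y <= w)%O => //=.
by rewrite (le_trans xy yw).
Qed.

Lemma itv_sub_r (x w z : T) : (w <= z)%O ->
  perm_eq (itv P x w) [seq y <- itv P x z | (y <= w)%O].
Proof.
move=> wz; apply: uniq_perm; first exact: itv_uniq.
  by rewrite filter_uniq // itv_uniq.
move=> y; rewrite mem_filter !mem_itv.
case yw: (y <= w)%O; rewrite /= ?andbF ?andbT //.
by rewrite (le_trans yw wz) andbT.
Qed.

Lemma conv_assoc (A B C : incid T) x z :
  conv P (conv P A B) C x z = conv P A (conv P B C) x z.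
Proof.
rewrite /conv.
transitivity (\sum_(w <- itv P x z) \sum_(y <- itv P x z)
   (if (y <= w)%O then A x y * B y w * C w z else 0)).
  rewrite [LHS]big_seq [RHS]big_seq; apply: eq_bigr => w; rewrite mem_itv => /andP[_ wz].
  rewrite mulr_suml (perm_big _ (itv_sub_r x _ _ wz)) big_filter [LHS]big_mkcond.
  by apply: eq_bigr => y _; case: ifP.
rewrite exchange_big /=.
rewrite [LHS]big_seq [RHS]big_seq; apply: eq_bigr => y; rewrite mem_itv => /andP[xy _].
rewrite mulr_sumr (perm_big _ (itv_sub_l _ _ z xy)) big_filter [RHS]big_mkcond.
by apply: eq_bigr => w _; case: ifP => //; rewrite mulrA.
Qed.

Lemma conv_split (A B K : incid T) x z : (x <= z)%O ->
  (forall y, (x <= y)%O -> (y < z)%O -> A x y = B x y) ->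
  conv P A K x z - conv P B K x z = (A x z - B x z) * K z z.
Proof.
move=> xz H; rewrite /conv -sumrB (bigD1_seq z) ?mem_itv ?xz ?lexx ?itv_uniq //= mulrBl.
rewrite big_seq_cond big1 ?addr0 // => y /andP[]; rewrite mem_itv => /andP[xy yz] yneq.
by rewrite H ?subrr // lt_neqAle yneq yz.
Qed.

Lemma row_ind x (Q : T -> Prop) :
  (forall z, (x <= z)%O -> (forall y, (x <= y)%O -> (y < z)%O -> Q y) -> Q z) ->
  forall z, (x <= z)%O -> Q z.
Proof.
move=> H.
suff S: forall n z, (size (itv P x z) <= n)%N -> (x <= z)%O -> Q z.
  by move=> z; apply: S (leqnn _).
elim=> [|n IH] z.
  rewrite leqn0 => /nilP e xz; have := mem_itv P x z z.
  by rewrite e in_nil xz lexx.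
move=> s xz; apply: (H z xz) => y xy yz; apply: (IH y _ xy).
have: (size (z :: itv P x y) <= size (itv P x z))%N.
  apply: uniq_leq_size.
    rewrite /= itv_uniq andbT mem_itv; apply/negP => /andP[_ zy].
    by move: (lt_le_trans yz zy); rewrite ltxx.
  move=> w; rewrite inE !mem_itv => /orP[/eqP ->|/andP[xw wy]].
    by rewrite (le_trans xy (ltW yz)) lexx.
  by rewrite xw (le_trans wy (ltW yz)).
move=> /= h; rewrite -ltnS; exact: leq_trans h s.
Qed.

Definition rev_poly (r : nat) (p : {poly int}) := \poly_(i < r.+1) p`_(r - i).

Lemma rev_polyB r (p q : {poly int}) : rev_poly r (p - q) = rev_poly r p - rev_poly r q.
Proof.
apply/polyP => i; rewrite coefB !coef_poly; case: ifP => _; rewrite ?coefB ?subr0 //.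
Qed.

Lemma rev_small r (p q : {poly int}) : (2 * (size p).-1 < r)%N -> (2 * (size q).-1 < r)%N ->
  rev_poly r (p - q) = p - q -> p = q.
Proof.
move=> hp hq e; apply/eqP; rewrite -subr_eq0; apply/eqP/polyP => i; rewrite coef0.
have hs: (size (p - q)%R <= maxn (size p) (size q))%N.
  by apply: leq_trans (size_polyD _ _) _; rewrite size_polyN.
have ci: (p - q)`_i = (rev_poly r (p - q))`_i by rewrite e.
case: (leqP (size (p - q)) i) => si; first exact: nth_default.
rewrite ci coef_poly; case: ifP => // ir.
apply: nth_default.
move: hp hq hs si ir; case: (size p) => [|a]; case: (size q) => [|b] /=; rewrite ?maxnE; lia.
Qed.

Lemma rk_nat (r : int) (k : nat) : 2%:Z * k%:Z < r -> (2 * k < `|r|)%N.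
Proof. move=> h; lia. Qed.

End Aux.

Theorem proposition2p8 (d : Order.disp_t) (T : porderType d) (P : wrposet T)
  (kappa f g h : incid T) (x : T) :
  is_kernel P kappa -> right_KLS P kappa f -> left_KLS P kappa g ->
  in_Ihalf P h ->
  (forall z, x <= z -> conv P (bar P h) f x z = conv P h (bar P f) x z) ->
  forall z, x <= z -> h x z = g x z.
Proof.
move=> [kI [k1 [kk1 kk2]]] [[fI [f1 fh]] fK] [[gI [g1 gh]] gK] [hI [h1 hh]] H.
have S1: forall z, x <= z -> conv P (bar P h) f x z = conv P (conv P h kappa) f x z.
  move=> z xz; rewrite H // conv_assoc /conv; apply: eq_big_seq => y.
  by rewrite mem_itv => /andP[_ yz]; rewrite fK.
have S2: forall z, x <= z -> bar P h x z = conv P h kappa x z.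
  apply: (@row_ind _ _ P x (fun z => bar P h x z = conv P h kappa x z)) => z xz IH.
  have := @conv_split _ _ P (bar P h) (conv P h kappa) f _ _ xz IH.
  rewrite S1 // GRing.subrr f1 GRing.mulr1 => /esym /eqP.
  by rewrite GRing.subr_eq0 => /eqP.
apply: (@row_ind _ _ P x (fun z => h x z = g x z)) => z xz IH.
have := @conv_split _ _ P h g kappa _ _ xz IH.
rewrite k1 GRing.mulr1 -S2 // -(gK x z xz) => e.
case: (eqVneq x z) => [<-|xnz]; first by rewrite h1 g1.
have xz' : x < z by rewrite lt_neqAle xnz xz.
have bE: forall F, bar P F x z = rev_poly `|rk P x z| (F x z) by [].
rewrite !bE -rev_polyB in e.
by apply: rev_small e; apply: rk_nat; [apply: hh | apply: gh].
Qed.
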